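(* Let $T$ be a symmetric network (so $T_{ij}=T_{ji}$ for all $i,j$) with $T_{ii}\ge \tfrac12$ for all $i\in N$, let the initial beliefs $x_0\in[0,1]^n$ be fixed, and fix $\epsilon>0$. For $q\in[0,1]$ let $T^*(q)$ be the network induced by confirmation bias $q$. Then the average convergence time $\tau$ of $T^*(q)$ is weakly monotonically increasing in $q$.
   Context: Agents $N=\{1,\dots,n\}$ communicate through a network $T$, an $n\times n$ row-stochastic matrix with entries $T_{ij}\in[0,1]$ ($T_{ij}$ is the weight agent $i$ places on agent $j$'s view; $T_{ii}$ is the self-link). $T$ is assumed strongly connected and aperiodic. Each agent $i$ has an initial belief $x_{i0}\in[0,1]$. Confirmation bias of strength $q\in[0,1]$ produces a network $T^*$ as follows: for $j\neq i$, if $|x_{i0}-x_{j0}|>1-q$ then $T^*_{ij}=0$ and the weight $T_{ij}$ is added to $i$'s self-link; otherwise $T^*_{ij}=T_{ij}$; thus $T^*_{ii}=T_{ii}+\sum_{j\ne i:\,|x_{i0}-x_{j0}|>1-q}T_{ij}$. $T^*$ is assumed strongly connected. Beliefs evolve by $x_t=T^*x_{t-1}$. For a network $P$ with stationary distribution (influence vector) $s$, i.e. the left eigenvector with $sP=s$, $\sum_i s_i=1$, the average convergence time is $\tau=\min\{t>0:\frac1n\sum_i\|P^t(i,\cdot)-s\|_2^2<\epsilon\}$, where $P^t(i,\cdot)$ is the $i$-th row of $P^t$ and $\|\cdot\|_2$ the Euclidean norm. *)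

(* Defs.v *)
From mathcomp Require Import all_boot all_order all_algebra.
From mathcomp Require Import reals.
Set Implicit Arguments. Unset Strict Implicit. Unset Printing Implicit Defensive.
Import Order.TTheory GRing.Theory Num.Theory.
Local Open Scope ring_scope.

Fixpoint mxpow (R : realType) (n : nat) (P : 'M[R]_n) (t : nat) : 'M[R]_n :=
  match t with
  | O => 1%:M
  | t'.+1 => P *m mxpow P t'
  end.

Definition row_stochastic (R : realType) (n : nat) (P : 'M[R]_n) : Prop :=
  (forall i j, 0 <= P i j) /\ (forall i, \sum_j P i j = 1).

Definition symmetric_net (R : realType) (n : nat) (P : 'M[R]_n) : Prop :=
  forall i j, P i j = P j i.

Definition strongly_connected (R : realType) (n : nat) (P : 'M[R]_n) : Prop :=
  forall i j, exists k, 0 < mxpow P k i j.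

Definition aperiodic (R : realType) (n : nat) (P : 'M[R]_n) : Prop :=
  forall i (d : nat),
    (forall k : nat, (0 < k)%N -> 0 < mxpow P k i i -> (d %| k)%N) -> d = 1%N.

Definition Tstar (R : realType) (n : nat) (T : 'M[R]_n) (x0 : 'I_n -> R) (q : R)
  : 'M[R]_n :=
  \matrix_(i, j)
    if i == j then
      T i i + \sum_(k | (k != i) && (1 - q < `|x0 i - x0 k|)) T i k
    else if 1 - q < `|x0 i - x0 j| then 0 else T i j.

Definition stationary (R : realType) (n : nat) (P : 'M[R]_n) (s : 'rV[R]_n) : Prop :=
  s *m P = s /\ \sum_j s 0 j = 1 /\ (forall j, 0 <= s 0 j).

Definition avg_dist (R : realType) (n : nat) (P : 'M[R]_n) (s : 'rV[R]_n) (t : nat) : R :=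
  (n%:R)^-1 * \sum_i \sum_j (mxpow P t i j - s 0 j) ^+ 2.

Definition is_conv_time (R : realType) (n : nat) (P : 'M[R]_n) (s : 'rV[R]_n)
  (eps : R) (tau : nat) : Prop :=
  (0 < tau)%N /\ avg_dist P s tau < eps /\
  (forall t : nat, (0 < t)%N -> avg_dist P s t < eps -> (tau <= t)%N).

(* Main.v *)
Require Import Defs.
From mathcomp Require Import all_boot all_order all_algebra.
From mathcomp Require Import reals.
From mathcomp Require Import ring lra.
Import Order.TTheory GRing.Theory Num.Theory.
Local Open Scope ring_scope.

Section Gen.
Variable R : realType.
Variable n : nat.
Implicit Types P A C : 'M[R]_n.

Lemma mxpowSr P t : mxpow P t.+1 = mxpow P t *m P.
Proof.
elim: t => [|t IH]; first by rewrite /= mulmx1 mul1mx.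
have -> : mxpow P t.+2 = P *m mxpow P t.+1 by [].
by rewrite [in LHS]IH mulmxA.
Qed.

Lemma mxpowD P a b : mxpow P (a + b) = mxpow P a *m mxpow P b.
Proof.
elim: a => [|a IH] /=; first by rewrite mul1mx.
by rewrite IH mulmxA.
Qed.

Lemma mxpow_tr P t : P^T = P -> (mxpow P t)^T = mxpow P t.
Proof.
move=> HP; elim: t => [|t IH] /=; first by rewrite trmx1.
by rewrite trmx_mul IH HP -mxpowSr.
Qed.

Definition psd A := forall v : 'rV[R]_n, 0 <= (v *m A *m v^T) 0 0.

Lemma sqform_ge0 (w : 'rV[R]_n) : 0 <= (w *m w^T) 0 0.
Proof.
rewrite !mxE; apply: sumr_ge0 => j _; rewrite mxE -expr2; exact: sqr_ge0.
Qed.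

Lemma psd_pow A : A^T = A -> psd A -> forall c (v : 'rV[R]_n),
  0 <= (v *m mxpow A c *m v^T) 0 0.
Proof.
move=> HA Hpsd c v.
rewrite -(odd_double_half c) -addnn.
set h := c./2.
case: (odd c) => /=.
- rewrite add0n mxpowD [A *m (_ *m _)]mulmxA.
  have -> : A *m mxpow A h = mxpow A h *m A by rewrite -mxpowSr.
  have -> : v *m (mxpow A h *m A *m mxpow A h) *m v^T
     = (v *m mxpow A h) *m A *m (v *m mxpow A h)^T.
    by rewrite trmx_mul mxpow_tr // !mulmxA.
  exact: Hpsd.
- rewrite add0n mxpowD mulmxA.
  have -> : v *m mxpow A h *m mxpow A h *m v^T
     = (v *m mxpow A h) *m (v *m mxpow A h)^T.
    by rewrite trmx_mul mxpow_tr // mulmxA.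
  exact: sqform_ge0.
Qed.

Lemma mx11_mul (Y Z : 'M[R]_1) : (Y *m Z) 0 0 = Y 0 0 * Z 0 0.
Proof. by rewrite mxE big_ord1. Qed.
Lemma mxaddE (p q : nat) (Y Z : 'M[R]_(p,q)) i j : (Y + Z) i j = Y i j + Z i j.
Proof. by rewrite mxE. Qed.
Lemma mxscaleE (p q : nat) (c : R) (Y : 'M[R]_(p,q)) i j : (c *: Y) i j = c * Y i j.
Proof. by rewrite mxE. Qed.

Section Rank1.
Variables (A : 'M[R]_n) (u : 'rV[R]_n) (w : R).
Hypotheses (HA : A^T = A) (Hpsd : psd A) (Hw : 0 <= w).
Let C := A + w *: (u^T *m u).

Lemma key_pos b : forall a, 0 <= (u *m mxpow A a *m mxpow C b *m u^T) 0 0.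
Proof.
elim: b => [|b IH] a.
  by rewrite /= mulmx1; apply: psd_pow.
set X := mxpow C b.
have -> : mxpow C b.+1 = C *m X by [].
have -> : u *m mxpow A a *m (C *m X) *m u^T =
   u *m mxpow A a.+1 *m X *m u^T
   + w *: ((u *m mxpow A a *m u^T) *m (u *m X *m u^T)).
  rewrite /C mulmxDl mulmxDr mulmxDl mxpowSr -!mulmxA; congr (_ + _).
  by rewrite -!scalemxAl -!scalemxAr !mulmxA.
rewrite mxaddE mxscaleE mx11_mul.
apply: addr_ge0; first exact: IH.
apply: mulr_ge0 => //; apply: mulr_ge0; first exact: psd_pow.
by have := IH 0%N; rewrite /= mulmx1.
Qed.

Lemma trace_step k : forall m,
  \tr (mxpow A (m + k)) <= \tr (mxpow A m *m mxpow C k).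
Proof.
elim: k => [|k IH] m.
  by rewrite addn0 /= mulmx1.
rewrite mxpowSr /C !mulmxDr mxtraceD.
rewrite -[X in X <= _]addr0; apply: lerD.
  rewrite mulmxA mxtrace_mulC mulmxA -addSnnS; exact: IH.
rewrite -!scalemxAr mxtraceZ.
have -> : mxpow A m *m (mxpow C k *m (u^T *m u)) = (mxpow A m *m mxpow C k *m u^T) *m u.
  by rewrite !mulmxA.
rewrite mxtrace_mulC trace_mx11.
apply: mulr_ge0 => //; rewrite !mulmxA; exact: key_pos.
Qed.

Lemma trace_mono k : \tr (mxpow A k) <= \tr (mxpow C k).
Proof. by have := trace_step k 0; rewrite add0n /= mul1mx. Qed.

Lemma C_sym : C^T = C.
Proof. by rewrite /C linearD linearZ /= trmx_mul trmxK HA. Qed.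

Lemma C_psd : psd C.
Proof.
move=> v; rewrite /C mulmxDr mulmxDl mxaddE.
apply: addr_ge0; first exact: Hpsd.
rewrite -scalemxAr -scalemxAl mxscaleE; apply: mulr_ge0 => //.
have -> : v *m (u^T *m u) *m v^T = (v *m u^T) *m (u *m v^T) by rewrite !mulmxA.
rewrite mx11_mul.
have -> : (v *m u^T) 0 0 = (u *m v^T) 0 0.
  by rewrite -(trmxK (v *m u^T)) trmx_mul trmxK mxE.
rewrite -expr2; exact: sqr_ge0.
Qed.
End Rank1.

Lemma trace_mono_list (I : Type) (r : seq I) (w : I -> R) (u : I -> 'rV[R]_n) :
  (forall i, 0 <= w i) -> forall A k, A^T = A -> psd A ->
  \tr (mxpow A k) <= \tr (mxpow (A + \sum_(i <- r) w i *: ((u i)^T *m u i)) k).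
Proof.
move=> Hw; elim: r => [|x r IH] A k HA Hpsd.
  by rewrite big_nil addr0.
rewrite big_cons addrA.
apply: le_trans (@trace_mono A (u x) (w x) HA Hpsd (Hw x) k) _.
apply: IH; [exact: C_sym | exact: C_psd].
Qed.


Lemma sum_delta (F : 'I_n -> R) i : \sum_j (i == j)%:R * F j = F i.
Proof.
rewrite (bigD1 i) //= eqxx mul1r big1 ?addr0 // => j /negbTE.
by rewrite eq_sym => ->; rewrite mul0r.
Qed.

Definition good P := P^T = P /\ (forall i j, 0 <= P i j) /\
  (forall i, \sum_j P i j = 1) /\ (forall i, 2^-1 <= P i i).

Lemma good_psd P : good P -> psd P.
Proof.
move=> [HT [Hnn [Hrow Hdiag]]] v.
have Psym i j : P i j = P j i by rewrite -{1}HT mxE.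
have Hcol j : \sum_i P i j = 1.
  by under eq_bigr do rewrite Psym; exact: Hrow.
set V := fun i => v 0 i.
have ES : (v *m P *m v^T) 0 0 = \sum_i \sum_j V i * P i j * V j.
  rewrite mxE; under eq_bigr do rewrite !mxE mulr_suml.
  by rewrite exchange_big.
rewrite ES.
have key : 0 <= \sum_i \sum_j (2 * P i j - (i == j)%:R) * (V i + V j) ^+ 2.
  apply: sumr_ge0 => i _; apply: sumr_ge0 => j _; apply: mulr_ge0; last exact: sqr_ge0.
  case: (eqVneq i j) => [->|ne] /=.
    by have := Hdiag j; rewrite lerBrDr add0r; lra.
  by rewrite subr0; apply: mulr_ge0 => //.
have s1 : \sum_i \sum_j P i j * V i ^+ 2 = \sum_i V i ^+ 2.
  by apply: eq_bigr => i _; rewrite -mulr_suml Hrow mul1r.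
have s2 : \sum_i \sum_j P i j * V j ^+ 2 = \sum_i V i ^+ 2.
  by rewrite exchange_big; apply: eq_bigr => j _; rewrite -mulr_suml Hcol mul1r.
have s3 : \sum_i \sum_j (i == j)%:R * (V i + V j) ^+ 2 = 4 * \sum_i V i ^+ 2.
  rewrite mulr_sumr; apply: eq_bigr => i _.
  by rewrite (sum_delta (fun j => (V i + V j) ^+ 2)); ring.
have E : \sum_i \sum_j (2 * P i j - (i == j)%:R) * (V i + V j) ^+ 2 =
  2 * (\sum_i \sum_j P i j * V i ^+ 2) + 2 * (\sum_i \sum_j P i j * V j ^+ 2)
  + 4 * (\sum_i \sum_j V i * P i j * V j)
  - \sum_i \sum_j (i == j)%:R * (V i + V j) ^+ 2.
  rewrite !mulr_sumr -!big_split -sumrB /=; apply: eq_bigr => i _.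
  rewrite !mulr_sumr -!big_split -sumrB /=; apply: eq_bigr => j _.
  ring.
move: key; rewrite E s1 s2 s3; lra.
Qed.

Lemma mxpow0E P i j : mxpow P 0 i j = (i == j)%:R.
Proof. by rewrite /= mxE. Qed.

Lemma mxpowSE P t i j : mxpow P t.+1 i j = \sum_l P i l * mxpow P t l j.
Proof. by rewrite /= mxE. Qed.

Lemma mxpow_nn P : (forall i j, 0 <= P i j) -> forall t i j, 0 <= mxpow P t i j.
Proof.
move=> H; elim=> [|t IH] i j; first by rewrite mxpow0E ler0n.
rewrite mxpowSE; apply: sumr_ge0 => l _; exact: mulr_ge0.
Qed.

Lemma mxpow_row P : (forall i, \sum_j P i j = 1) -> forall t i, \sum_j mxpow P t i j = 1.
Proof.
move=> H; elim=> [|t IH] i.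
  under eq_bigr do rewrite mxpow0E.
  by rewrite (bigD1 i) //= eqxx big1 ?addr0 // => j; rewrite eq_sym => /negbTE ->.
under eq_bigr do rewrite mxpowSE.
rewrite exchange_big /=.
under eq_bigr do rewrite -mulr_sumr IH mulr1.
exact: H.
Qed.

Lemma good_sym P : good P -> forall i j, P i j = P j i.
Proof. by move=> [HT _] i j; rewrite -{1}HT mxE. Qed.

Lemma mxpow_sym P : good P -> forall t i j, mxpow P t i j = mxpow P t j i.
Proof.
move=> [HT _] t i j; by rewrite -{1}(@mxpow_tr P t HT) mxE.
Qed.

Lemma mxpow_col P : good P -> forall t j, \sum_i mxpow P t i j = 1.
Proof.
move=> HP t j; under eq_bigr do rewrite (@mxpow_sym P HP).
by case: HP => [_ [_ [Hr _]]]; apply: mxpow_row.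
Qed.

Lemma stat_unif P s : good P -> strongly_connected P -> stationary P s ->
  forall j, s 0 j = n%:R^-1.
Proof.
move=> HP Hsc [Hfix [Hsum Hnn]].
have [_ [Pnn [Prow Pdiag]]] := HP.
have [i0 _] : exists i : 'I_n, true.
  case: (pickP (fun _ : 'I_n => true)) => [i0 _|H]; first by exists i0.
  move: Hsum; rewrite big1 => [/esym/eqP|k _]; first by rewrite oner_eq0.
  by have := H k.
case: (@arg_maxP _ R 'I_n i0 xpredT (fun i => s 0 i) erefl) => imax _ Hmax.
set M := s 0 imax.
have harm i : s 0 i = \sum_l P i l * s 0 l.
  rewrite -{1}Hfix mxE; apply: eq_bigr => l _.
  by rewrite mulrC (@good_sym P HP).
have step i l : s 0 i = M -> 0 < P i l -> s 0 l = M.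
  move=> Hi Pil.
  have E : \sum_l (P i l * (M - s 0 l)) = 0.
    under eq_bigr do rewrite mulrBr.
    by rewrite sumrB -mulr_suml Prow mul1r -harm Hi subrr.
  have := psumr_eq0P _ E (i:=l) isT.
  move=> /(_ _)/eqP; rewrite mulf_eq0 (gt_eqF Pil) /= subr_eq0 => /(_ _)/eqP.
  move=> H; apply/esym; apply: H => k _.
  by apply: mulr_ge0; [exact: Pnn | rewrite subr_ge0; exact: Hmax].
have claim k : forall i j, s 0 i = M -> 0 < mxpow P k i j -> s 0 j = M.
  elim: k => [|k IH] i j Hi.
    by rewrite mxpow0E; case: eqP => [<- //|]; rewrite ltxx.
  rewrite mxpowSE => Hpos.
  case: (boolP [exists l, 0 < P i l * mxpow P k l j]) => [/existsP [l Hl]|].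
    have Hx := @mxpow_nn P Pnn k l j.
    have Pil : 0 < P i l.
      rewrite lt_def Pnn andbT; apply/negP => /eqP E0.
      by move: Hl; rewrite E0 mul0r ltxx.
    have Xl : 0 < mxpow P k l j.
      rewrite lt_def Hx andbT; apply/negP => /eqP E0.
      by move: Hl; rewrite E0 mulr0 ltxx.
    exact: IH l j (step i l Hi Pil) Xl.
  move=> /existsPn H; exfalso; move: Hpos; rewrite big1 ?ltxx // => l _.
  apply/eqP; rewrite eq_le mulr_ge0 ?andbT ?Pnn ?(@mxpow_nn P Pnn) //.
  by rewrite leNgt H.
have allM j : s 0 j = M.
  have [k Hk] := Hsc imax j; exact: claim k imax j erefl Hk.
have HnM : M *+ n = 1.
  by rewrite -Hsum; under eq_bigr do rewrite allM; rewrite sumr_const card_ord.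
move=> j; rewrite allM.
have Hn0 : (n%:R : R) != 0.
  by apply/eqP => E0; move: HnM; rewrite -mulr_natr E0 mulr0 => /eqP; rewrite eq_sym oner_eq0.
by apply: (mulIf Hn0); rewrite mulVf // mulr_natr.
Qed.


Lemma avg_formula P (s : 'rV[R]_n) t : good P -> (forall j, s 0 j = n%:R^-1) -> (0 < n)%N ->
  avg_dist P s t = n%:R^-1 * (\tr (mxpow P (t + t)) - 1).
Proof.
move=> HP Hs Hn.
have [_ [Pnn [Prow _]]] := HP.
have Hn0 : (n%:R : R) != 0 by rewrite pnatr_eq0 -lt0n.
set c := (n%:R : R)^-1.
set X := mxpow P t.
have inner i : \sum_j (X i j - s 0 j) ^+ 2 = \sum_j X i j ^+ 2 + (n%:R * c ^+ 2 - 2 * c).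
  transitivity (\sum_j (X i j ^+ 2 + (c ^+ 2 - 2 * c * X i j))).
    by apply: eq_bigr => j _; rewrite Hs -/c; ring.
  rewrite big_split /= sumrB sumr_const card_ord -mulr_sumr.
  by rewrite (@mxpow_row P Prow) mulr1 !mulr_natl.
rewrite /avg_dist; under eq_bigr do rewrite inner.
rewrite big_split /= sumr_const card_ord.
have -> : \sum_i \sum_j X i j ^+ 2 = \tr (mxpow P (t + t)).
  rewrite mxpowD /mxtrace; apply: eq_bigr => i _; rewrite mxE.
  by apply: eq_bigr => j _; rewrite (@mxpow_sym P HP t j i) expr2.
congr (_ * _); rewrite -mulr_natl /c; field => //.
Qed.

Lemma persist P : good P -> forall k d i j, 0 < mxpow P k i j -> 0 < mxpow P (k + d) i j.
Proof.
move=> HP k d i j Hk.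
have [_ [Pnn [_ Pdiag]]] := HP.
elim: d => [|d IH]; first by rewrite addn0.
rewrite addnS mxpowSE (bigD1 i) //=.
apply: (@lt_le_trans _ _ (P i i * mxpow P (k + d) i j)).
  apply: mulr_gt0 => //; apply: lt_le_trans (Pdiag i); rewrite invr_gt0; lra.
rewrite lerDl; apply: sumr_ge0 => l _; apply: mulr_ge0 => //; exact: mxpow_nn.
Qed.

Lemma all_pos P : good P -> strongly_connected P ->
  exists K, (0 < K)%N /\ forall i j, 0 < mxpow P K i j.
Proof.
move=> HP Hsc.
pose kf (p : 'I_n * 'I_n) := ex_minn (Hsc p.1 p.2).
exists (\max_p kf p).+1; split => // i j.
have Hle : (kf (i, j) <= (\max_p kf p).+1)%N by apply: leqW; exact: leq_bigmax.
rewrite -(subnKC Hle); apply: persist => //.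
rewrite /kf /=; case: ex_minnP => m Hm _; exact: Hm.
Qed.

Lemma minpos (I : finType) (F : I -> R) : (forall i, 0 < F i) ->
  exists d, 0 < d /\ forall i, d <= F i.
Proof.
move=> HF.
suff [d [Hd Hle]] : exists d, 0 < d /\ forall i, i \in enum I -> d <= F i.
  by exists d; split => // i; apply: Hle; rewrite mem_enum.
elim: (enum I) => [|x r [d [Hd Hle]]]; first by exists 1; split => //.
exists (Num.min (F x) d); split; first by rewrite lt_min HF Hd.
move=> i; rewrite in_cons => /orP [/eqP ->|Hi]; first by rewrite ge_min lexx.
by rewrite ge_min Hle ?orbT.
Qed.

Lemma geo (g e : R) : 0 <= g < 1 -> 0 < e -> exists m, g ^+ m < e.
Proof.
move=> /andP [g0 g1] He.
case: (eqVneq g 0) => [->|gn0]; first by exists 1%N; rewrite expr1.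
have gp : 0 < g by rewrite lt_def gn0 g0.
set h := g^-1 - 1.
have hp : 0 < h by rewrite /h subr_gt0 invf_gt1.
have bern m : 1 + m%:R * h <= (1 + h) ^+ m.
  elim: m => [|m IH]; first by rewrite mul0r addr0 expr0.
  rewrite exprS.
  apply: le_trans (_ : (1 + h) * (1 + m%:R * h) <= _); last first.
    by apply: ler_wpM2l => //; rewrite addr_ge0 // ltW.
  rewrite -natr1; have : 0 <= m%:R * h * h by rewrite mulr_ge0 // ?mulr_ge0 // ltW.
  nra.
have gh : g^-1 = 1 + h by rewrite /h addrC subrK.
have Hb := @archi_boundP R ((e * h)^-1) (ltW _).
have Hb' := Hb ltac:(by rewrite invr_gt0 mulr_gt0).
exists (Num.Def.archi_bound (e * h)^-1).
set m := Num.Def.archi_bound _ in Hb' *.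
have : e^-1 < g^-1 ^+ m.
  rewrite gh; apply: lt_le_trans (bern m).
  have : e^-1 < m%:R * h.
    by have := Hb'; rewrite -(ltr_pM2r hp) invfM mulfVK ?gt_eqF.
  lra.
rewrite exprVn ltf_pV2 ?posrE ?exprn_gt0 //.
Qed.


Lemma converge P (s : 'rV[R]_n) eps : good P -> strongly_connected P ->
  (forall j, s 0 j = n%:R^-1) -> (0 < n)%N -> 0 < eps ->
  exists t, (0 < t)%N /\ avg_dist P s t < eps.
Proof.
move=> HP Hsc Hs Hn Heps.
have [_ [Pnn [Prow _]]] := HP.
have [K [HK Kpos]] := @all_pos P HP Hsc.
set Q := mxpow P K.
have [d [Hd Hdle]] := @minpos _ (fun p : 'I_n * 'I_n => Q p.1 p.2) (fun p => Kpos p.1 p.2).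
have Hdle' i j : d <= Q i j by exact: (Hdle (i, j)).
have Hn0 : (n%:R : R) != 0 by rewrite pnatr_eq0 -lt0n.
have Hnp : (0 : R) < n%:R by rewrite ltr0n.
set c := (n%:R : R)^-1.
set g := 1 - n%:R * d.
pose i0 := Ordinal Hn.
have Qrow i : \sum_l Q i l = 1 := @mxpow_row P Prow K i.
have g0 : 0 <= g.
  rewrite /g subr_ge0 mulr_natl -(Qrow i0).
  have -> : d *+ n = \sum_(l < n) d by rewrite sumr_const card_ord.
  by apply: ler_sum => l _; exact: Hdle'.
have g1 : g < 1 by rewrite /g ltrBlDr ltrDl mulr_gt0.
have c0 : 0 < c by rewrite invr_gt0.
have c1 : c <= 1 by rewrite invf_le1 // ler1n.
have bound m : forall i j, `|mxpow P (K * m) i j - c| <= g ^+ m.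
  elim: m => [|m IH] i j.
    rewrite muln0 mxpow0E expr0; case: eqP => _.
      by rewrite /= ger0_norm ?subr_ge0 //; lra.
    by rewrite /= sub0r normrN ger0_norm // ltW.
  rewrite mulnS mxpowD mxE.
  set X := mxpow P (K * m).
  have E : \sum_l Q i l * X l j - c = \sum_l (Q i l - d) * (X l j - c).
    rewrite [RHS](eq_bigr (fun l => Q i l * X l j - (c * Q i l + d * X l j - d * c)));
      last by move=> l _; ring.
    rewrite sumrB; congr (_ - _).
    rewrite sumrB big_split /= -!mulr_sumr Qrow (@mxpow_col P HP) sumr_const card_ord.
    rewrite -mulr_natr /c; field => //.
  rewrite E; apply: le_trans (ler_norm_sum _ _ _) _.
  apply: le_trans (_ : \sum_l (Q i l - d) * g ^+ m <= _).
    apply: ler_sum => l _; rewrite normrM ger0_norm ?subr_ge0 //.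
    by apply: ler_wpM2l; rewrite ?subr_ge0.
  rewrite -mulr_suml sumrB sumr_const card_ord Qrow exprS /g mulr_natl.
  by rewrite lexx.
have [m Hm] := @geo g (eps / n%:R) ltac:(by rewrite g0 g1) ltac:(by rewrite divr_gt0).
exists (K * m.+1)%N; split; first by rewrite muln_gt0 HK.
rewrite /avg_dist.
have gm1 : g ^+ m.+1 <= g ^+ m by rewrite exprS ler_piMl // ?exprn_ge0 // ltW.
have gm0 : 0 <= g ^+ m.+1 by rewrite exprn_ge0.
have gm1' : g ^+ m.+1 <= 1 by rewrite exprn_ile1 // ltW.
have term i j : (mxpow P (K * m.+1) i j - s 0 j) ^+ 2 <= g ^+ m.
  rewrite Hs -/c -(ger0_norm (sqr_ge0 _)) normrX.
  have Hb := bound m.+1 i j.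
  have Hx : 0 <= `|mxpow P (K * m.+1) i j - c| by exact: normr_ge0.
  apply: le_trans gm1; rewrite expr2.
  apply: le_trans (_ : g ^+ m.+1 * g ^+ m.+1 <= _).
    by apply: ler_pM.
  by rewrite ler_piMr.
apply: le_lt_trans (_ : c * (\sum_(i < n) \sum_(j < n) g ^+ m) < _).
  apply: ler_wpM2l; first exact: ltW.
  apply: ler_sum => i _; apply: ler_sum => j _.
  exact: term.
rewrite !sumr_const !card_ord.
have -> : g ^+ m *+ n *+ n = n%:R * (n%:R * g ^+ m) by rewrite !mulr_natl.
rewrite /c mulKf //.
by move: Hm; rewrite (ltr_pdivlMr _ _ Hnp) mulrC.
Qed.


Lemma sum_delta' (F : 'I_n -> R) i : \sum_j (j == i)%:R * F j = F i.
Proof. by rewrite -(sum_delta F i); apply: eq_bigr => j _; rewrite eq_sym. Qed.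

Lemma quad (F : 'I_n -> 'I_n -> R) i j :
  \sum_a \sum_b F a b * (((a == i)%:R - (b == i)%:R) * ((a == j)%:R - (b == j)%:R))
  = (i == j)%:R * (\sum_b F i b + \sum_a F a i) - F i j - F j i.
Proof.
transitivity (\sum_a \sum_b ((a == i)%:R * ((a == j)%:R * F a b)
   + (b == i)%:R * ((b == j)%:R * F a b) - (a == i)%:R * ((b == j)%:R * F a b)
   - (b == i)%:R * ((a == j)%:R * F a b))).
  by apply: eq_bigr => a _; apply: eq_bigr => b _; ring.
have inner a : \sum_b ((a == i)%:R * ((a == j)%:R * F a b)
   + (b == i)%:R * ((b == j)%:R * F a b) - (a == i)%:R * ((b == j)%:R * F a b)
   - (b == i)%:R * ((a == j)%:R * F a b)) =
   (a == i)%:R * ((a == j)%:R * \sum_b F a b) + (i == j)%:R * F a i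
   - (a == i)%:R * F a j - (a == j)%:R * F a i.
  rewrite !sumrB big_split /= -!mulr_sumr.
  rewrite (sum_delta' (fun b => (b == j)%:R * F a b)) (sum_delta' (fun b => F a b)).
  by rewrite (sum_delta' (fun b => (a == j)%:R * F a b)).
under eq_bigr do rewrite inner.
rewrite !sumrB big_split /=.
rewrite (sum_delta' (fun a => (a == j)%:R * \sum_b F a b)) -mulr_sumr.
rewrite (sum_delta' (fun a => F a j)) (sum_delta' (fun a => F a i)).
rewrite mulrDr; congr (_ - _ - _); congr (_ + _).
Qed.


Lemma Tstar_good (T : 'M[R]_n) x0 q : row_stochastic T -> symmetric_net T ->
  (forall i, 2^-1 <= T i i) -> good (Tstar T x0 q).
Proof.
move=> [Tnn Trow] Tsym Tdiag.
split; [|split; [|split]].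
- apply/matrixP => i j; rewrite !mxE.
  case: (eqVneq i j) => [->|ne]; first by [].
  by rewrite distrC Tsym.
- move=> i j; rewrite mxE; case: eqP => _.
    by apply: addr_ge0 => //; apply: sumr_ge0.
  by case: ifP.
- move=> i; rewrite (bigD1 i) //= mxE eqxx; transitivity (\sum_j T i j); last exact: Trow i.
  rewrite [RHS](bigD1 i) //= -addrA.
  congr (_ + _).
  have -> : \sum_(j | j != i) Tstar T x0 q i j =
     \sum_(j | j != i) (if 1 - q < `|x0 i - x0 j| then 0 else T i j).
    by apply: eq_bigr => j ne; rewrite mxE eq_sym (negbTE ne).
  rewrite big_mkcondr -big_split /=; apply: eq_bigr => j _.
  by case: ifP => _; rewrite ?addr0 ?add0r.
- move=> i; rewrite mxE eqxx; apply: le_trans (Tdiag i) _.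
  by rewrite lerDl; apply: sumr_ge0.
Qed.

Lemma Tstar_decomp (T : 'M[R]_n) x0 q1 q2 : symmetric_net T -> q1 <= q2 -> q2 <= 1 ->
  Tstar T x0 q2 = Tstar T x0 q1 + \sum_(p : 'I_n * 'I_n)
    (if (1 - q2 < `|x0 p.1 - x0 p.2|) && ~~ (1 - q1 < `|x0 p.1 - x0 p.2|)
     then T p.1 p.2 / 2 else 0) *:
    ((delta_mx 0 p.1 - delta_mx 0 p.2 : 'rV[R]_n)^T *m (delta_mx 0 p.1 - delta_mx 0 p.2 : 'rV[R]_n)).
Proof.
move=> Tsym Hq12 Hq2.
set D := fun a b => (1 - q2 < `|x0 a - x0 b|) && ~~ (1 - q1 < `|x0 a - x0 b|).
set W := fun a b => if D a b then T a b / 2 else 0.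
have Dsym a b : D a b = D b a by rewrite /D distrC.
have Wsym a b : W a b = W b a by rewrite /W Dsym Tsym.
have Dii a : D a a = false.
  by rewrite /D subrr normr0 ltNge subr_ge0 Hq2.
have c12 a b : 1 - q1 < `|x0 a - x0 b| -> 1 - q2 < `|x0 a - x0 b|.
  by move=> H; apply: le_lt_trans H; lra.
apply/matrixP => i j; rewrite mxaddE summxE.
have -> : \sum_(p : 'I_n * 'I_n) ((if D p.1 p.2 then T p.1 p.2 / 2 else 0) *:
    ((delta_mx 0 p.1 - delta_mx 0 p.2 : 'rV[R]_n)^T *m (delta_mx 0 p.1 - delta_mx 0 p.2 : 'rV[R]_n))) i j
  = \sum_a \sum_b W a b * (((a == i)%:R - (b == i)%:R) * ((a == j)%:R - (b == j)%:R)).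
  rewrite pair_bigA /=; apply: eq_bigr => p _.
  by rewrite mxscaleE mxE big_ord1 !mxE /= (eq_sym i p.1) (eq_sym i p.2) (eq_sym j p.1) (eq_sym j p.2).
rewrite quad.
case: (eqVneq i j) => [<-|ne].
- rewrite !mxE !eqxx mul1r.
  have -> : \sum_a W a i = \sum_b W i b by apply: eq_bigr => a _; rewrite Wsym.
  rewrite [W i i]/W Dii subr0.
  have -> : \sum_b W i b + \sum_b W i b = \sum_(k | k != i) (if D i k then T i k else 0).
    rewrite -big_split /= (bigD1 i) //= /W Dii addr0 add0r.
    by apply: eq_bigr => k _; case: ifP => _; [field | rewrite addr0].
  rewrite -addrA; congr (_ + _).
  rewrite subr0 !big_mkcondr -big_split /=; apply: eq_bigr => k _; rewrite /D.
  case: ifP => H2; case: ifP => H1 //=; rewrite ?addr0 ?add0r //.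
  by move: H2; rewrite c12.
- rewrite !mxE (negbTE ne) mul0r sub0r -(Wsym i j) /W.
  case: ifP => H2; case: ifP => H1; rewrite /D H2 H1 /=.
  all: try by [rewrite (c12 _ _ H1) in H2].
  all: by field.
Qed.

End Gen.
Arguments good {R n} P.
Arguments psd {R n} A.

Theorem theorem1 (R : realType) (n : nat) (T : 'M[R]_n) (x0 : 'I_n -> R) (eps : R)
  (HTst : row_stochastic T) (HTsym : symmetric_net T)
  (HTsc : strongly_connected T) (HTap : aperiodic T)
  (HTdiag : forall i, 2^-1 <= T i i)
  (Hx0 : forall i, 0 <= x0 i <= 1) (Heps : 0 < eps)
  (q1 q2 : R) (Hq1 : 0 <= q1) (Hq12 : q1 <= q2) (Hq2 : q2 <= 1)
  (Hsc1 : strongly_connected (Tstar T x0 q1))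
  (Hsc2 : strongly_connected (Tstar T x0 q2))
  (s1 s2 : 'rV[R]_n)
  (Hs1 : stationary (Tstar T x0 q1) s1) (Hs2 : stationary (Tstar T x0 q2) s2) :
  exists tau1 tau2 : nat,
    is_conv_time (Tstar T x0 q1) s1 eps tau1 /\
    is_conv_time (Tstar T x0 q2) s2 eps tau2 /\
    (tau1 <= tau2)%N.
Proof.
set P1 := Tstar T x0 q1; set P2 := Tstar T x0 q2.
have G1 : good P1 := @Tstar_good R n T x0 q1 HTst HTsym HTdiag.
have G2 : good P2 := @Tstar_good R n T x0 q2 HTst HTsym HTdiag.
have Hn : (0 < n)%N.
  case: (posnP n) => // E; case: Hs1 => _ [Hsum _]; move: Hsum.
  rewrite big1 => [|i _]; last by exfalso; case: i => m Hm; move: Hm; rewrite E.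
  by move/esym/eqP; rewrite oner_eq0.
have U1 := @stat_unif R n P1 s1 G1 Hsc1 Hs1.
have U2 := @stat_unif R n P2 s2 G2 Hsc2 Hs2.
have dmono t : avg_dist P1 s1 t <= avg_dist P2 s2 t.
  rewrite (@avg_formula R n P1 s1 t G1 U1 Hn) (@avg_formula R n P2 s2 t G2 U2 Hn).
  apply: ler_wpM2l; first by rewrite invr_ge0 ler0n.
  apply: lerB => //.
  rewrite /P2 (@Tstar_decomp R n T x0 q1 q2 HTsym Hq12 Hq2) -/P1.
  apply: trace_mono_list.
  - move=> p /=; case: ifP => _ //; apply: divr_ge0 => //; by case: HTst.
  - by case: G1.
  - exact: good_psd.
have [t [Ht Hlt]] := @converge R n P2 s2 eps G2 Hsc2 U2 Hn Heps.
have ex2 : exists t, (0 < t)%N && (avg_dist P2 s2 t < eps).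
  by exists t; rewrite Ht Hlt.
case: (ex_minnP ex2) => tau2 /andP [Ht2 Hl2] Hmin2.
have ex1 : exists t, (0 < t)%N && (avg_dist P1 s1 t < eps).
  by exists tau2; rewrite Ht2 (le_lt_trans (dmono tau2) Hl2).
case: (ex_minnP ex1) => tau1 /andP [Ht1 Hl1] Hmin1.
exists tau1, tau2; split; [|split].
- split => //; split => // t' Ht' Hl'; apply: Hmin1; by rewrite Ht' Hl'.
- split => //; split => // t' Ht' Hl'; apply: Hmin2; by rewrite Ht' Hl'.
- by apply: Hmin1; rewrite Ht2 (le_lt_trans (dmono tau2) Hl2).
Qed.
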